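(* Let $X$ be a sup-lattice. Then $X$ is an imprimitivity bimodule between some Morita equivalent m-regular involutive quantales $A$ and $B$ if and only if there exists a surjective sup-preserving map $p: X\otimes X^*\otimes X\to X$ such that for all $x_1,\dots,x_5\in X$: a) $p(p(x_1\otimes x_2^*\otimes x_3)\otimes x_4^*\otimes x_5)=p(x_1\otimes p(x_4\otimes x_3^*\otimes x_2)^*\otimes x_5)=p(x_1\otimes x_2^*\otimes p(x_3\otimes x_4^*\otimes x_5))$; b) if $p(u\otimes v^*\otimes x_1)=p(u\otimes v^*\otimes x_2)$ for all $u,v\in X$, then $x_1=x_2$; c) if $p(x_1\otimes v^*\otimes u)=p(x_2\otimes v^*\otimes u)$ for all $u,v\in X$, then $x_1=x_2$.
   Context: A sup-lattice is a complete lattice; sup-preserving maps preserve arbitrary joins; $\otimes$ is the sup-lattice tensor product. For a sup-lattice $X$, its conjugate $X^*$ is the same sup-lattice, and $x\mapsto x^*$ denotes the identity map $X\to X^*$. A quantale is a sup-lattice with an associative multiplication distributing over arbitrary joins on both sides; an involutive quantale additionally has a map $a\mapsto a^*$ with $a^{**}=a$, $(\bigvee a_i)^*=\bigvee a_i^*$, $(ab)^*=b^*a^*$. Modules over a quantale $A$ are sup-lattices with an associative action preserving arbitrary joins in each variable; a right module $M$ is essential if every element is a join of elements $m\cdot a$, separated if ($m\cdot a=n\cdot a$ for all $a$) implies $m=n$, m-regular if both; dually for left modules; an m-regular $A,B$-bimodule is an m-regular left $A$-module and m-regular right $B$-module with commuting actions; a quantale is m-regular if it is m-regular as a bimodule over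 itself. For involutive quantales $A,B$, an imprimitivity $A,B$-bimodule is a sup-lattice $X$ which is an m-regular $A,B$-bimodule equipped with inner products ${}_A\langle-,-\rangle:X\times X\to A$ and $\langle-,-\rangle_B:X\times X\to B$, each preserving arbitrary joins in each variable, such that ${}_A\langle a\cdot x,y\rangle=a\cdot{}_A\langle x,y\rangle$, ${}_A\langle x,y\rangle^*={}_A\langle y,x\rangle$, $\langle x,y\cdot b\rangle_B=\langle x,y\rangle_B\cdot b$, $\langle x,y\rangle_B^*=\langle y,x\rangle_B$, both inner products are full (every element of $A$, resp. $B$, is a join of inner products), and ${}_A\langle x,y\rangle\cdot z=x\cdot\langle y,z\rangle_B$ for all $x,y,z\in X$, $a\in A$, $b\in B$. *)

(* Defs.v *)
Set Implicit Arguments.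
Unset Strict Implicit.

Record supLattice := SupLattice {
  car :> Type;
  le : car -> car -> Prop;
  le_refl : forall x, le x x;
  le_trans : forall x y z, le x y -> le y z -> le x z;
  le_antisym : forall x y, le x y -> le y x -> x = y;
  sup : (car -> Prop) -> car;
  sup_ub : forall (S : car -> Prop) x, S x -> le x (sup S);
  sup_least : forall (S : car -> Prop) y, (forall x, S x -> le x y) -> le (sup S) y
}.

Definition image {T U : Type} (f : T -> U) (S : T -> Prop) : U -> Prop :=
  fun u => exists t, S t /\ u = f t.

Definition join_of {X : supLattice} (G : X -> Prop) (x : X) : Prop :=
  exists F : X -> Prop, (forall y, F y -> G y) /\ x = sup F.

Record quantale := Quantale {
  qlat :> supLattice;
  qmul : qlat -> qlat -> qlat;
  qmul_assoc : forall a b c, qmul (qmul a b) c = qmul a (qmul b c);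
  qmul_supr : forall a (S : qlat -> Prop), qmul a (sup S) = sup (image (qmul a) S);
  qmul_supl : forall a (S : qlat -> Prop),
      qmul (sup S) a = sup (image (fun b => qmul b a) S)
}.

Record invQuantale := InvQuantale {
  iquant :> quantale;
  qinv : iquant -> iquant;
  qinv_inv : forall a, qinv (qinv a) = a;
  qinv_sup : forall (S : iquant -> Prop), qinv (sup S) = sup (image qinv S);
  qinv_mul : forall a b, qinv (qmul a b) = qmul (qinv b) (qinv a)
}.

Definition is_left_module (A : quantale) (X : supLattice) (act : A -> X -> X) : Prop :=
  (forall a b x, act (qmul a b) x = act a (act b x)) /\
  (forall (S : A -> Prop) x, act (sup S) x = sup (image (fun a => act a x) S)) /\
  (forall a (S : X -> Prop), act a (sup S) = sup (image (act a) S)).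

Definition is_right_module (B : quantale) (X : supLattice) (act : X -> B -> X) : Prop :=
  (forall x a b, act x (qmul a b) = act (act x a) b) /\
  (forall (S : X -> Prop) b, act (sup S) b = sup (image (fun x => act x b) S)) /\
  (forall x (S : B -> Prop), act x (sup S) = sup (image (act x) S)).

Definition left_essential (A : quantale) (X : supLattice) (act : A -> X -> X) : Prop :=
  forall x : X, join_of (fun y => exists a m, y = act a m) x.

Definition left_separated (A : quantale) (X : supLattice) (act : A -> X -> X) : Prop :=
  forall x y : X, (forall a, act a x = act a y) -> x = y.

Definition right_essential (B : quantale) (X : supLattice) (act : X -> B -> X) : Prop :=
  forall x : X, join_of (fun y => exists m b, y = act m b) x.

Definition right_separated (B : quantale) (X : supLattice) (act : X -> B -> X) : Prop :=
  forall x y : X, (forall b, act x b = act y b) -> x = y.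

Definition m_regular_left (A : quantale) (X : supLattice) (act : A -> X -> X) : Prop :=
  is_left_module act /\ left_essential act /\ left_separated act.

Definition m_regular_right (B : quantale) (X : supLattice) (act : X -> B -> X) : Prop :=
  is_right_module act /\ right_essential act /\ right_separated act.

Definition m_regular_bimodule (A B : quantale) (X : supLattice)
    (lact : A -> X -> X) (ract : X -> B -> X) : Prop :=
  m_regular_left lact /\ m_regular_right ract /\
  (forall a x b, ract (lact a x) b = lact a (ract x b)).

Definition m_regular_quantale (A : quantale) : Prop :=
  @m_regular_bimodule A A A (@qmul A) (@qmul A).

Definition is_imprimitivity (A B : invQuantale) (X : supLattice)
    (lact : A -> X -> X) (ract : X -> B -> X)
    (lip : X -> X -> A) (rip : X -> X -> B) : Prop :=
  m_regular_bimodule lact ract /\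
  (forall (S : X -> Prop) y, lip (sup S) y = sup (image (fun x => lip x y) S)) /\
  (forall x (S : X -> Prop), lip x (sup S) = sup (image (lip x) S)) /\
  (forall (S : X -> Prop) y, rip (sup S) y = sup (image (fun x => rip x y) S)) /\
  (forall x (S : X -> Prop), rip x (sup S) = sup (image (rip x) S)) /\
  (forall a x y, lip (lact a x) y = qmul a (lip x y)) /\
  (forall x y, qinv (lip x y) = lip y x) /\
  (forall x y b, rip x (ract y b) = qmul (rip x y) b) /\
  (forall x y, qinv (rip x y) = rip y x) /\
  (forall a : A, join_of (fun c => exists x y, c = lip x y) a) /\
  (forall b : B, join_of (fun c => exists x y, c = rip x y) b) /\
  (forall x y z, lact (lip x y) z = ract x (rip y z)).

(** * The threefold tensor product X (x) Y (x) Z of sup-lattices,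
    realized (Joyal--Tierney) as the sup-lattice of subsets of X*Y*Z that are
    down-closed and closed under joins in each variable separately. *)
Section Tensor.
Variables X Y Z : supLattice.

Definition tclosed (S : X -> Y -> Z -> Prop) : Prop :=
  (forall x y z x' y' z', S x y z -> le x' x -> le y' y -> le z' z -> S x' y' z') /\
  (forall (F : X -> Prop) y z, (forall x, F x -> S x y z) -> S (sup F) y z) /\
  (forall x (F : Y -> Prop) z, (forall y, F y -> S x y z) -> S x (sup F) z) /\
  (forall x y (F : Z -> Prop), (forall z, F z -> S x y z) -> S x y (sup F)).

Definition tcl (R : X -> Y -> Z -> Prop) : X -> Y -> Z -> Prop :=
  fun x y z => forall T, tclosed T -> (forall a b c, R a b c -> T a b c) -> T x y z.

Lemma tcl_closed R : tclosed (tcl R).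
Proof.
  split; [|split; [|split]].
  - intros x y z x' y' z' H h1 h2 h3 T HT HR.
    exact (proj1 HT _ _ _ _ _ _ (H T HT HR) h1 h2 h3).
  - intros F y z H T HT HR. destruct HT as [Hd [Hx [Hy Hz]]].
    apply Hx; intros x Fx; apply (H x Fx T (conj Hd (conj Hx (conj Hy Hz))) HR).
  - intros x F z H T HT HR. destruct HT as [Hd [Hx [Hy Hz]]].
    apply Hy; intros y Fy; apply (H y Fy T (conj Hd (conj Hx (conj Hy Hz))) HR).
  - intros x y F H T HT HR. destruct HT as [Hd [Hx [Hy Hz]]].
    apply Hz; intros z Fz; apply (H z Fz T (conj Hd (conj Hx (conj Hy Hz))) HR).
Qed.

Definition tensor3 : Type := { S : X -> Y -> Z -> Prop | tclosed S }.

Definition ttensor (x : X) (y : Y) (z : Z) : tensor3 :=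
  exist _ (tcl (fun a b c => a = x /\ b = y /\ c = z)) (tcl_closed _).

Definition tsup (F : tensor3 -> Prop) : tensor3 :=
  exist _ (tcl (fun a b c => exists t : tensor3, F t /\ proj1_sig t a b c))
        (tcl_closed _).

End Tensor.

Definition tensor_sup_preserving {X Y Z : supLattice} {W : supLattice}
    (p : tensor3 X Y Z -> W) : Prop :=
  forall F : tensor3 X Y Z -> Prop, p (tsup F) = sup (image p F).

(** The conjugate X^* is X itself (with x |-> x^* the identity), so
    X (x) X^* (x) X is tensor3 X X X and x1 (x) x2^* (x) x3 is ttensor x1 x2 x3. *)
Definition conj_lat (X : supLattice) : supLattice := X.

(* Main.v *)
Require Import Defs.
From Stdlib Require Import FunctionalExtensionality PropExtensionality ProofIrrelevance.

Lemma sup_eq_intro (L : supLattice) (S T : L -> Prop) :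
  (forall y, S y -> exists y', T y' /\ le y y') ->
  (forall y, T y -> exists y', S y' /\ le y y') -> sup S = sup T.
Proof.
  intros H1 H2; apply le_antisym; apply sup_least; intros y Hy.
  - destruct (H1 y Hy) as [y' [Ht Hle]]. eapply le_trans; [exact Hle| apply sup_ub; exact Ht].
  - destruct (H2 y Hy) as [y' [Ht Hle]]. eapply le_trans; [exact Hle| apply sup_ub; exact Ht].
Qed.

Lemma le_sup_mono (L : supLattice) (S T : L -> Prop) :
  (forall y, S y -> exists y', T y' /\ le y y') -> le (sup S) (sup T).
Proof.
  intros H1; apply sup_least; intros y Hy.
  destruct (H1 y Hy) as [y' [Ht Hle]]. eapply le_trans; [exact Hle| apply sup_ub; exact Ht].
Qed.

Lemma image_image {A B C : Type} (f : B -> C) (g : A -> B) (S : A -> Prop) :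
  image f (image g S) = image (fun x => f (g x)) S.
Proof.
  extensionality u; apply propositional_extensionality; unfold image; split.
  - intros [b [[a [Sa ->]] ->]]. exists a; auto.
  - intros [a [Sa ->]]. exists (g a); split; [exists a; auto| reflexivity].
Qed.


Lemma sup_image_ext {A : Type} (L : supLattice) (f g : A -> L) (S : A -> Prop) :
  (forall x, S x -> f x = g x) -> sup (image f S) = sup (image g S).
Proof.
  intros H; f_equal; extensionality u; apply propositional_extensionality; unfold image;
  split; intros [x [Sx ->]]; exists x; split; auto; symmetry; auto.
Qed.

Lemma spres_mono (L M : supLattice) (f : L -> M) :
  (forall S, f (sup S) = sup (image f S)) -> forall x y, le x y -> le (f x) (f y).
Proof.
  intros Hf x y Hxy.
  assert (E : y = sup (fun z => z = x \/ z = y)).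
  { apply le_antisym; [apply sup_ub; auto | apply sup_least; intros z [->| ->]; auto using le_refl]. }
  rewrite E, Hf. apply sup_ub. exists x; split; auto.
Qed.

Lemma join_of_le (L : supLattice) (K : L -> Prop) a :
  le a (sup (fun c => K c /\ le c a)) -> join_of K a.
Proof.
  intros H. exists (fun c => K c /\ le c a). split; [tauto|].
  apply le_antisym; [exact H| apply sup_least; tauto].
Qed.

Lemma join_of_le_inv (L : supLattice) (K : L -> Prop) a :
  join_of K a -> le a (sup (fun c => K c /\ le c a)).
Proof.
  intros [F [HF ->]]. apply le_sup_mono. intros y Fy. exists y; split; [|apply le_refl].
  split; [auto | apply sup_ub; exact Fy].
Qed.

Lemma join_of_trans (L : supLattice) (K K' : L -> Prop) a :
  join_of K' a -> (forall c, K' c -> join_of K c) -> join_of K a.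
Proof.
  intros H H'. apply join_of_le. destruct H as [F [HF ->]]. apply sup_least. intros c Fc.
  specialize (H' c (HF c Fc)). apply join_of_le_inv in H'. eapply le_trans; [exact H'|].
  apply le_sup_mono. intros y [Ky Hy]. exists y; split; [|apply le_refl].
  split; [auto| eapply le_trans; [exact Hy| apply sup_ub; exact Fc]].
Qed.

Lemma join_of_mono (L : supLattice) (K K' : L -> Prop) a :
  (forall y, K y -> K' y) -> join_of K a -> join_of K' a.
Proof. intros H [F [HF E]]. exists F; split; auto. Qed.

Section TensorLemmas.
Variables X Y Z : supLattice.

Lemma tcl_incl (R : X -> Y -> Z -> Prop) a b c : R a b c -> tcl R a b c.
Proof. intros H T _ HR; apply HR, H. Qed.

Lemma tcl_least (R T : X -> Y -> Z -> Prop) : tclosed T ->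
  (forall a b c, R a b c -> T a b c) -> forall a b c, tcl R a b c -> T a b c.
Proof. intros HT HR a b c H; apply H; auto. Qed.

Lemma t3_ext (s t : tensor3 X Y Z) :
  (forall a b c, proj1_sig s a b c -> proj1_sig t a b c) ->
  (forall a b c, proj1_sig t a b c -> proj1_sig s a b c) -> s = t.
Proof.
  destruct s as [s Hs], t as [t Ht]; simpl; intros H1 H2.
  assert (s = t) by (extensionality a; extensionality b; extensionality c;
    apply propositional_extensionality; split; auto).
  subst; f_equal; apply proof_irrelevance.
Qed.

Lemma ttensor_sup1 (S : X -> Prop) (y : Y) (z : Z) :
  ttensor (sup S) y z = tsup (image (fun x => ttensor x y z) S).
Proof.
  apply t3_ext; simpl.
  - apply tcl_least; [apply tcl_closed|]. intros a b c [-> [-> ->]].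
    apply (proj1 (proj2 (tcl_closed _))). intros x Sx. apply tcl_incl.
    exists (ttensor x y z). split; [exists x; auto| simpl; apply tcl_incl; auto].
  - apply tcl_least; [apply tcl_closed|]. intros a b c [t [[x [Sx ->]] Ht]]. simpl in Ht.
    revert a b c Ht; apply tcl_least; [apply tcl_closed|]. intros a b c [-> [-> ->]].
    apply (proj1 (tcl_closed _) (sup S) y z x y z);
      [apply tcl_incl; auto | apply sup_ub; auto | apply le_refl | apply le_refl].
Qed.

Lemma ttensor_sup2 (x : X) (S : Y -> Prop) (z : Z) :
  ttensor x (sup S) z = tsup (image (fun y => ttensor x y z) S).
Proof.
  apply t3_ext; simpl.
  - apply tcl_least; [apply tcl_closed|]. intros a b c [-> [-> ->]].
    apply (proj1 (proj2 (proj2 (tcl_closed _)))). intros y Sy. apply tcl_incl.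
    exists (ttensor x y z). split; [exists y; auto| simpl; apply tcl_incl; auto].
  - apply tcl_least; [apply tcl_closed|]. intros a b c [t [[y [Sy ->]] Ht]]. simpl in Ht.
    revert a b c Ht; apply tcl_least; [apply tcl_closed|]. intros a b c [-> [-> ->]].
    apply (proj1 (tcl_closed _) x (sup S) z x y z);
      [apply tcl_incl; auto | apply le_refl | apply sup_ub; auto | apply le_refl].
Qed.

Lemma ttensor_sup3 (x : X) (y : Y) (S : Z -> Prop) :
  ttensor x y (sup S) = tsup (image (fun z => ttensor x y z) S).
Proof.
  apply t3_ext; simpl.
  - apply tcl_least; [apply tcl_closed|]. intros a b c [-> [-> ->]].
    apply (proj2 (proj2 (proj2 (tcl_closed _)))). intros z Sz. apply tcl_incl.
    exists (ttensor x y z). split; [exists z; auto| simpl; apply tcl_incl; auto].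
  - apply tcl_least; [apply tcl_closed|]. intros a b c [t [[z [Sz ->]] Ht]]. simpl in Ht.
    revert a b c Ht; apply tcl_least; [apply tcl_closed|]. intros a b c [-> [-> ->]].
    apply (proj1 (tcl_closed _) x y (sup S) x y z);
      [apply tcl_incl; auto | apply le_refl | apply le_refl | apply sup_ub; auto].
Qed.

Lemma tdecomp (t : tensor3 X Y Z) :
  t = tsup (fun s => exists a b c, proj1_sig t a b c /\ s = ttensor a b c).
Proof.
  apply t3_ext; simpl.
  - intros a b c H. apply tcl_incl. exists (ttensor a b c). split.
    + exists a, b, c; auto.
    + simpl; apply tcl_incl; auto.
  - apply tcl_least; [apply (proj2_sig t)|]. intros a b c [s [[a' [b' [c' [H ->]]]] Hs]].
    simpl in Hs. revert a b c Hs. apply tcl_least; [apply (proj2_sig t)|].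
    intros a b c [-> [-> ->]]; exact H.
Qed.

Variable W : supLattice.
Variable f : X -> Y -> Z -> W.
Hypothesis f1 : forall S b c, f (sup S) b c = sup (image (fun a => f a b c) S).
Hypothesis f2 : forall a S c, f a (sup S) c = sup (image (fun b => f a b c) S).
Hypothesis f3 : forall a b S, f a b (sup S) = sup (image (fun c => f a b c) S).

Definition pf (t : tensor3 X Y Z) : W :=
  sup (fun w => exists a b c, proj1_sig t a b c /\ w = f a b c).

Lemma f_mono x y z x' y' z' : le x' x -> le y' y -> le z' z -> le (f x' y' z') (f x y z).
Proof.
  intros h1 h2 h3.
  eapply le_trans; [apply (spres_mono _ _ (fun a => f a y' z') (fun S => f1 S y' z')); exact h1|].
  eapply le_trans; [apply (spres_mono _ _ (fun b => f x b z') (fun S => f2 x S z')); exact h2|].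
  apply (spres_mono _ _ (fun c => f x y c) (fun S => f3 x y S)); exact h3.
Qed.

Lemma tclosed_bound M : tclosed (fun a b c => le (f a b c) M).
Proof.
  split; [|split; [|split]].
  - intros x y z x' y' z' H h1 h2 h3. eapply le_trans; [apply f_mono; eauto | exact H].
  - intros F y z H. rewrite f1. apply sup_least. intros w [a [Fa ->]]; auto.
  - intros x F z H. rewrite f2. apply sup_least. intros w [a [Fa ->]]; auto.
  - intros x y F H. rewrite f3. apply sup_least. intros w [a [Fa ->]]; auto.
Qed.

Lemma pf_tensor x y z : pf (ttensor x y z) = f x y z.
Proof.
  apply le_antisym.
  - apply sup_least. intros w [a [b [c [H ->]]]]. simpl in H. revert a b c H.
    apply tcl_least; [apply tclosed_bound|]. intros a b c [-> [-> ->]]; apply le_refl.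
  - apply sup_ub. exists x, y, z. split; [apply tcl_incl; auto | reflexivity].
Qed.

Lemma pf_sup (F : tensor3 X Y Z -> Prop) : pf (tsup F) = sup (image pf F).
Proof.
  apply le_antisym.
  - apply sup_least. intros w [a [b [c [H ->]]]]. simpl in H. revert a b c H.
    apply tcl_least; [apply tclosed_bound|]. intros a b c [t [Ft Ht]].
    eapply le_trans; [| apply sup_ub; exists t; split; [exact Ft| reflexivity]].
    apply sup_ub; exists a, b, c; auto.
  - apply sup_least. intros w [t [Ft ->]]. apply sup_least.
    intros w [a [b [c [H ->]]]]. apply sup_ub. exists a, b, c.
    split; [apply tcl_incl; exists t; auto | reflexivity].
Qed.
End TensorLemmas.

Record good (X : supLattice) (P : X -> X -> X -> X) : Prop := {
  g1 : forall S y z, P (sup S) y z = sup (image (fun x => P x y z) S);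
  g2 : forall x S z, P x (sup S) z = sup (image (fun y => P x y z) S);
  g3 : forall x y S, P x y (sup S) = sup (image (P x y) S);
  gA : forall x1 x2 x3 x4 x5, P (P x1 x2 x3) x4 x5 = P x1 x2 (P x3 x4 x5);
  gB : forall x1 x2 x3 x4 x5, P x1 (P x4 x3 x2) x5 = P x1 x2 (P x3 x4 x5);
  gb : forall x1 x2, (forall u v, P u v x1 = P u v x2) -> x1 = x2;
  gess : forall x, join_of (fun y => exists u v w, y = P u v w) x }.
Arguments good {X} P.
Arguments g1 {X P}. Arguments g2 {X P}. Arguments g3 {X P}. Arguments gA {X P}. Arguments gB {X P}. Arguments gb {X P}. Arguments gess {X P}.

Section Construction.
Variable X : supLattice.
Variable P : X -> X -> X -> X.
Hypothesis G : good P.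

Definition pa := ((X -> X) * (X -> X))%type.
Definition ple (a b : pa) := forall z, le (fst a z) (fst b z) /\ le (snd a z) (snd b z).
Definition psup (S : pa -> Prop) : pa :=
  (fun z => sup (image (fun a => fst a z) S), fun z => sup (image (fun a => snd a z) S)).
Definition spres (f : X -> X) := forall S, f (sup S) = sup (image f S).
Definition gen u v : pa := (P u v, P v u).
Definition Ga (a : pa) : pa -> Prop := fun g => exists u v, g = gen u v /\ ple g a.
Definition InA (a : pa) := spres (fst a) /\ spres (snd a) /\ ple a (psup (Ga a)).
Definition pmul (a b : pa) : pa := (fun z => fst a (fst b z), fun z => snd b (snd a z)).
Definition pinv (a : pa) : pa := (snd a, fst a).

Lemma ple_refl a : ple a a.
Proof. intro z; split; apply le_refl. Qed.
Lemma ple_trans a b c : ple a b -> ple b c -> ple a c.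
Proof. intros H1 H2 z; destruct (H1 z), (H2 z); split; eapply le_trans; eauto. Qed.
Lemma psup_ub S a : S a -> ple a (psup S).
Proof. intros Sa z; split; apply sup_ub; exists a; auto. Qed.
Lemma psup_least S b : (forall a, S a -> ple a b) -> ple (psup S) b.
Proof.
  intros H z; split; apply sup_least; intros w [a [Sa ->]]; apply (H a Sa z).
Qed.
Lemma psup_mono (S T : pa -> Prop) : (forall a, S a -> T a) -> ple (psup S) (psup T).
Proof. intros H; apply psup_least; intros a Sa; apply psup_ub; auto. Qed.
Lemma pa_eq (a b : pa) : (forall z, fst a z = fst b z) -> (forall z, snd a z = snd b z) -> a = b.
Proof.
  destruct a as [a1 a2], b as [b1 b2]; simpl; intros H1 H2.
  f_equal; extensionality z; auto.
Qed.

Lemma smono f : spres f -> forall x y, le x y -> le (f x) (f y).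
Proof. intros H; apply spres_mono; exact H. Qed.

Lemma repr_fst a : InA a -> forall z, fst a z = sup (image (fun g => fst g z) (Ga a)).
Proof.
  intros [_ [_ H]] z. apply le_antisym; [apply (H z)|].
  apply sup_least. intros w [g [[u [v [-> Hg]]] ->]]. apply (Hg z).
Qed.
Lemma repr_snd a : InA a -> forall z, snd a z = sup (image (fun g => snd g z) (Ga a)).
Proof.
  intros [_ [_ H]] z. apply le_antisym; [apply (H z)|].
  apply sup_least. intros w [g [[u [v [-> Hg]]] ->]]. apply (Hg z).
Qed.

Lemma InA_gen u v : InA (gen u v).
Proof.
  split; [|split].
  - intro S. apply (g3 G).
  - intro S. apply (g3 G).
  - apply psup_ub. exists u, v; split; [reflexivity| apply ple_refl].
Qed.

Lemma InA_sup S : (forall a, S a -> InA a) -> InA (psup S).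
Proof.
  intros HS. split; [|split].
  - intros T. simpl. apply le_antisym.
    + apply sup_least. intros w [a [Sa ->]]. rewrite (proj1 (HS a Sa)).
      apply sup_least. intros w [t [Tt ->]].
      eapply le_trans; [| apply sup_ub; exists t; split; [exact Tt | reflexivity]].
      apply sup_ub. exists a; auto.
    + apply sup_least. intros w [t [Tt ->]]. apply sup_least. intros w [a [Sa ->]].
      eapply le_trans; [| apply sup_ub; exists a; split; [exact Sa| reflexivity]].
      apply (smono _ (proj1 (HS a Sa))). apply sup_ub; exact Tt.
  - intros T. simpl. apply le_antisym.
    + apply sup_least. intros w [a [Sa ->]]. rewrite (proj1 (proj2 (HS a Sa))).
      apply sup_least. intros w [t [Tt ->]].
      eapply le_trans; [| apply sup_ub; exists t; split; [exact Tt | reflexivity]].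
      apply sup_ub. exists a; auto.
    + apply sup_least. intros w [t [Tt ->]]. apply sup_least. intros w [a [Sa ->]].
      eapply le_trans; [| apply sup_ub; exists a; split; [exact Sa| reflexivity]].
      apply (smono _ (proj1 (proj2 (HS a Sa)))). apply sup_ub; exact Tt.
  - apply psup_least. intros a Sa. eapply ple_trans; [apply (proj2 (proj2 (HS a Sa)))|].
    apply psup_mono. intros g [u [v [-> Hg]]]. exists u, v; split; [reflexivity|].
    eapply ple_trans; [exact Hg| apply psup_ub; exact Sa].
Qed.

Lemma InA_inv a : InA a -> InA (pinv a).
Proof.
  intros Ha. destruct Ha as [H1 [H2 H3]]. split; [exact H2|split; [exact H1|]].
  intro z; split; simpl.
  - rewrite (repr_snd a (conj H1 (conj H2 H3))). apply sup_least.
    intros w [g [[u [v [-> Hg]]] ->]]. apply sup_ub. exists (gen v u). split; [|reflexivity].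
    exists v, u; split; [reflexivity|]. intro y; simpl; split; apply (Hg y).
  - rewrite (repr_fst a (conj H1 (conj H2 H3))). apply sup_least.
    intros w [g [[u [v [-> Hg]]] ->]]. apply sup_ub. exists (gen v u). split; [|reflexivity].
    exists v, u; split; [reflexivity|]. intro y; simpl; split; apply (Hg y).
Qed.

Lemma gen_mul_le a b u v u' v' : InA a -> InA b -> ple (gen u v) a -> ple (gen u' v') b ->
  ple (gen (P u v u') v') (pmul a b).
Proof.
  intros Ha Hb Hg Hg' w; simpl; split.
  - rewrite (gA G). eapply le_trans; [apply (proj1 (Hg (P u' v' w)))|].
    apply (smono _ (proj1 Ha)). apply (proj1 (Hg' w)).
  - rewrite (gB G). eapply le_trans; [apply (proj2 (Hg' (P v u w)))|].
    apply (smono _ (proj1 (proj2 Hb))). apply (proj2 (Hg w)).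
Qed.

Lemma InA_mul a b : InA a -> InA b -> InA (pmul a b).
Proof.
  intros Ha Hb. split; [|split].
  - intros S. simpl. rewrite (proj1 Hb), (proj1 Ha), image_image. reflexivity.
  - intros S. simpl. rewrite (proj1 (proj2 Ha)), (proj1 (proj2 Hb)), image_image. reflexivity.
  - intro z; split; simpl.
    + eapply le_trans; [apply (smono _ (proj1 Ha)); rewrite (repr_fst b Hb z); apply le_refl|].
      rewrite (proj1 Ha). apply sup_least.
      intros w [y [[g [[u' [v' [-> Hg']]] ->]] ->]]. simpl.
      rewrite (repr_fst a Ha). apply sup_least. intros w [g [[u [v [-> Hg]]] ->]]. simpl.
      apply sup_ub. exists (gen (P u v u') v'). split; [| simpl; symmetry; apply (gA G)].
      exists (P u v u'), v'. split; [reflexivity| apply gen_mul_le; auto].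
    + eapply le_trans; [apply (smono _ (proj1 (proj2 Hb))); rewrite (repr_snd a Ha z); apply le_refl|].
      rewrite (proj1 (proj2 Hb)). apply sup_least.
      intros w [y [[g [[u [v [-> Hg]]] ->]] ->]]. simpl.
      rewrite (repr_snd b Hb). apply sup_least. intros w [g [[u' [v' [-> Hg']]] ->]]. simpl.
      apply sup_ub. exists (gen (P u v u') v'). split; [| simpl; symmetry; apply (gB G)].
      exists (P u v u'), v'. split; [reflexivity| apply gen_mul_le; auto].
Qed.

Definition Acar := { a : pa | InA a }.

Lemma A_eq (a b : Acar) : proj1_sig a = proj1_sig b -> a = b.
Proof. destruct a as [a Ha], b as [b Hb]; simpl; intros ->; f_equal; apply proof_irrelevance. Qed.

Lemma InA_sup_img (S : Acar -> Prop) : InA (psup (image (@proj1_sig _ _) S)).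
Proof. apply InA_sup. intros a [t [_ ->]]. exact (proj2_sig t). Qed.

Definition ALat : supLattice.
Proof.
  refine {| car := Acar; le := fun a b => ple (proj1_sig a) (proj1_sig b);
            sup := fun S => exist _ (psup (image (@proj1_sig _ _) S)) (InA_sup_img S) |}.
  - intros; apply ple_refl.
  - intros x y z; apply ple_trans.
  - intros x y H1 H2. apply A_eq. apply pa_eq; intro z; apply le_antisym;
      first [apply (H1 z) | apply (H2 z)].
  - intros S x Sx. simpl. apply psup_ub. exists x; auto.
  - intros S y H. simpl. apply psup_least. intros a [t [St ->]]. apply H; exact St.
Defined.

Definition Amul (a b : ALat) : ALat :=
  exist _ (pmul (proj1_sig a) (proj1_sig b)) (InA_mul _ _ (proj2_sig a) (proj2_sig b)).

Definition AQ : quantale.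
Proof.
  refine (@Quantale ALat Amul _ _ _).
  - intros a b c. apply A_eq. reflexivity.
  - intros a S. apply A_eq. simpl. apply pa_eq; intro z; simpl.
    + rewrite (proj1 (proj2_sig a)), !image_image. reflexivity.
    + rewrite !image_image. reflexivity.
  - intros a S. apply A_eq. simpl. apply pa_eq; intro z; simpl.
    + rewrite !image_image. reflexivity.
    + rewrite (proj1 (proj2 (proj2_sig a))), !image_image. reflexivity.
Defined.

Definition Ainv (a : AQ) : AQ := exist _ (pinv (proj1_sig a)) (InA_inv _ (proj2_sig a)).

Definition AIQ : invQuantale.
Proof.
  refine (@InvQuantale AQ Ainv _ _ _).
  - intros a. apply A_eq. apply pa_eq; reflexivity.
  - intros S. apply A_eq. simpl. apply pa_eq; intro z; simpl; rewrite !image_image; reflexivity.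
  - intros a b. apply A_eq. reflexivity.
Defined.

Definition lact (a : AIQ) (x : X) : X := fst (proj1_sig a) x.
Definition lip (x y : X) : AIQ := exist _ (gen x y) (InA_gen x y).

Lemma lact_mod : is_left_module lact.
Proof.
  split; [|split].
  - reflexivity.
  - intros S x. unfold lact. simpl. rewrite image_image. reflexivity.
  - intros a S. apply (proj1 (proj2_sig a)).
Qed.

Lemma lact_ess : left_essential lact.
Proof.
  intros x. destruct (gess G x) as [F [HF ->]]. exists F; split; [|reflexivity].
  intros y Fy. destruct (HF y Fy) as [u [v [w ->]]]. exists (lip u v), w. reflexivity.
Qed.

Lemma lact_sep : left_separated lact.
Proof. intros x y H. apply (gb G). intros u v. exact (H (lip u v)). Qed.

Lemma lip_sup1 (S : X -> Prop) y : lip (sup S) y = sup (image (fun x => lip x y) S).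
Proof.
  apply A_eq. simpl. apply pa_eq; intro z; simpl; rewrite !image_image.
  - apply (g1 G).
  - apply (g2 G).
Qed.

Lemma lip_sup2 x (S : X -> Prop) : lip x (sup S) = sup (image (lip x) S).
Proof.
  apply A_eq. simpl. apply pa_eq; intro z; simpl; rewrite !image_image.
  - apply (g2 G).
  - apply (g1 G).
Qed.

Lemma lip_lact a x y : lip (lact a x) y = qmul a (lip x y).
Proof.
  apply A_eq. simpl. destruct a as [a Ha]. unfold lact; simpl.
  apply pa_eq; intro z; simpl.
  - rewrite (repr_fst a Ha x), (repr_fst a Ha (P x y z)), (g1 G), image_image.
    apply sup_image_ext. intros g [u [v [-> _]]]. simpl. apply (gA G).
  - rewrite (repr_fst a Ha x), (repr_snd a Ha z), (g2 G), (g3 G), !image_image.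
    apply sup_image_ext. intros g [u [v [-> _]]]. simpl. apply (gB G).
Qed.

Lemma lip_inv x y : qinv (lip x y) = lip y x.
Proof. apply A_eq. reflexivity. Qed.

Lemma lip_full (a : AIQ) : join_of (fun c => exists x y, c = lip x y) a.
Proof.
  apply join_of_le. simpl. eapply ple_trans; [apply (proj2 (proj2 (proj2_sig a)))|].
  apply psup_mono. intros g [u [v [-> Hg]]]. exists (lip u v). split; [|reflexivity].
  split; [exists u, v; reflexivity| exact Hg].
Qed.

Lemma lact_lip x y z : lact (lip x y) z = P x y z.
Proof. reflexivity. Qed.

Lemma lact_repr (a : AIQ) : exists R : X -> X -> Prop,
  forall x, lact a x = sup (fun y => exists u v, R u v /\ y = P u v x).
Proof.
  exists (fun u v => ple (gen u v) (proj1_sig a)). intros x. unfold lact.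
  rewrite (repr_fst _ (proj2_sig a)). apply sup_eq_intro.
  - intros y [g [[u [v [-> Hg]]] ->]]. exists (P u v x). split; [exists u, v; auto| apply le_refl].
  - intros y [u [v [Hg ->]]]. exists (P u v x). split; [|apply le_refl].
    exists (gen u v). split; [exists u, v; auto| reflexivity].
Qed.

Lemma AIQ_mreg : m_regular_quantale AIQ.
Proof.
  split; [|split].
  - split; [|split].
    + split; [|split].
      * apply qmul_assoc.
      * intros S x; apply qmul_supl.
      * apply qmul_supr.
    + intros a. eapply join_of_trans; [apply lip_full|].
      intros c [u [v ->]]. destruct (gess G u) as [F [HF Hu]].
      exists (image (fun x => lip x v) F). split.
      * intros c [x [Fx ->]]. destruct (HF x Fx) as [a' [b' [c' ->]]].
        exists (lip a' b'), (lip c' v). apply A_eq. simpl. apply pa_eq; intro z; simpl.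
        -- apply (gA G).
        -- apply (gB G).
      * rewrite Hu. apply lip_sup1.
    + intros x y H. apply A_eq. apply pa_eq; intro z.
      * apply (gb G). intros u v. specialize (H (lip u v)).
        apply (f_equal (fun c : AIQ => fst (proj1_sig c) z)) in H. exact H.
      * destruct (gess G z) as [F [HF ->]].
        rewrite (proj1 (proj2 (proj2_sig x))), (proj1 (proj2 (proj2_sig y))).
        apply sup_image_ext. intros t Ft. destruct (HF t Ft) as [u [v [w ->]]].
        specialize (H (lip v u)).
        apply (f_equal (fun c : AIQ => snd (proj1_sig c) w)) in H. exact H.
  - split; [|split].
    + split; [|split].
      * intros; symmetry; apply qmul_assoc.
      * intros S x; apply qmul_supl.
      * apply qmul_supr.
    + intros a. eapply join_of_trans; [apply lip_full|].
      intros c [u [v ->]]. destruct (gess G v) as [F [HF Hv]].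
      exists (image (fun x => lip u x) F). split.
      * intros c [x [Fx ->]]. destruct (HF x Fx) as [a' [b' [c' ->]]].
        exists (lip u c'), (lip b' a'). apply A_eq. simpl. apply pa_eq; intro z; simpl.
        -- apply (gB G).
        -- apply (gA G).
      * rewrite Hv. apply lip_sup2.
    + intros x y H. apply A_eq. apply pa_eq; intro z.
      * destruct (gess G z) as [F [HF ->]].
        rewrite (proj1 (proj2_sig x)), (proj1 (proj2_sig y)).
        apply sup_image_ext. intros t Ft. destruct (HF t Ft) as [u [v [w ->]]].
        specialize (H (lip u v)).
        apply (f_equal (fun c : AIQ => fst (proj1_sig c) w)) in H. exact H.
      * apply (gb G). intros u v. specialize (H (lip v u)).
        apply (f_equal (fun c : AIQ => snd (proj1_sig c) z)) in H. exact H.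
  - intros; apply qmul_assoc.
Qed.

End Construction.

Lemma dir1 (X : supLattice) :
  (exists (A B : invQuantale)
          (lact : A -> X -> X) (ract : X -> B -> X)
          (lip : X -> X -> A) (rip : X -> X -> B),
      m_regular_quantale A /\ m_regular_quantale B /\
      is_imprimitivity lact ract lip rip)
  ->
  (exists p : tensor3 X (conj_lat X) X -> X,
      tensor_sup_preserving p /\
      (forall x : X, exists t, p t = x) /\
      (forall x1 x2 x3 x4 x5 : X,
         p (ttensor (p (ttensor x1 x2 x3)) x4 x5)
           = p (ttensor x1 (p (ttensor x4 x3 x2)) x5) /\
         p (ttensor x1 (p (ttensor x4 x3 x2)) x5)
           = p (ttensor x1 x2 (p (ttensor x3 x4 x5)))) /\
      (forall x1 x2 : X,
         (forall u v : X, p (ttensor u v x1) = p (ttensor u v x2)) -> x1 = x2) /\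
      (forall x1 x2 : X,
         (forall u v : X, p (ttensor x1 v u) = p (ttensor x2 v u)) -> x1 = x2)).
Proof.
  unfold conj_lat.
  intros [A [B [lact [ract [lip [rip [_ [_ H]]]]]]]].
  destruct H as [[[LM [LE LS]] [[RM [RE RS]] Comm]]
                 [L1 [L2 [R1 [R2 [LL [LI [RR [RI [LF [RF Mid]]]]]]]]]]].
  destruct LM as [LM1 [LM2 LM3]]. destruct RM as [RM1 [RM2 RM3]].
  pose (f := fun (a b c : X) => lact (lip a b) c).
  assert (f1 : forall S b c, f (sup S) b c = sup (image (fun a => f a b c) S)).
  { intros. unfold f. rewrite L1, LM2, image_image. reflexivity. }
  assert (f2 : forall a S c, f a (sup S) c = sup (image (fun b => f a b c) S)).
  { intros. unfold f. rewrite L2, LM2, image_image. reflexivity. }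
  assert (f3 : forall a b S, f a b (sup S) = sup (image (fun c => f a b c) S)).
  { intros. unfold f. apply LM3. }
  pose proof (pf_tensor X X X X f f1 f2 f3) as PT.
  exists (pf X X X X f). split; [|split; [|split; [|split]]].
  - intros F. apply pf_sup; assumption.
  - intros x.
    exists (tsup (fun s => exists u v w, s = ttensor u v w /\ le (f u v w) x)).
    rewrite (pf_sup X X X X f f1 f2 f3). apply le_antisym.
    + apply sup_least. intros y [s [[u [v [w [-> H]]]] ->]]. rewrite PT; exact H.
    + assert (J : join_of (fun y => exists u v w, y = f u v w) x).
      { eapply join_of_trans; [apply LE|]. intros c [a [m ->]].
        destruct (LF a) as [Gs [HG ->]]. exists (image (fun c => lact c m) Gs). split.
        - intros y [c [Gc ->]]. destruct (HG c Gc) as [u [v ->]]. exists u, v, m; reflexivity.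
        - apply LM2. }
      apply join_of_le_inv in J. eapply le_trans; [exact J|]. apply le_sup_mono.
      intros y [[u [v [w ->]]] Hy]. exists (pf X X X X f (ttensor u v w)). split.
      * exists (ttensor u v w). split; [exists u, v, w; auto| reflexivity].
      * rewrite PT; apply le_refl.
  - intros x1 x2 x3 x4 x5. rewrite !PT. unfold f.
    assert (E1 : lip (lact (lip x1 x2) x3) x4 = qmul (lip x1 x2) (lip x3 x4)) by apply LL.
    assert (E2 : lip x1 (lact (lip x4 x3) x2) = qmul (lip x1 x2) (lip x3 x4)).
    { rewrite <- (LI (lact (lip x4 x3) x2) x1), LL, qinv_mul, !LI. reflexivity. }
    rewrite E1, E2, LM1. split; reflexivity.
  - intros x1 x2 H. apply LS. intros a. destruct (LF a) as [Gs [HG ->]].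
    rewrite !LM2. apply sup_image_ext. intros c Gc. destruct (HG c Gc) as [u [v ->]].
    specialize (H u v). rewrite !PT in H. exact H.
  - intros x1 x2 H. apply RS. intros b. destruct (RF b) as [Gs [HG ->]].
    rewrite !RM3. apply sup_image_ext. intros c Gc. destruct (HG c Gc) as [u [v ->]].
    specialize (H v u). rewrite !PT in H. unfold f in H. rewrite !Mid in H. exact H.
Qed.

Definition opQq (Q : quantale) : quantale.
Proof.
  refine (@Quantale (qlat Q) (fun a b => @qmul Q b a) _ _ _).
  - intros a b c. simpl. symmetry. apply qmul_assoc.
  - intros a S. simpl. apply qmul_supl.
  - intros a S. simpl. apply qmul_supr.
Defined.

Definition opQ (Q : invQuantale) : invQuantale.
Proof.
  refine (@InvQuantale (opQq (iquant Q)) (@qinv Q) _ _ _).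
  - apply qinv_inv.
  - apply qinv_sup.
  - intros a b. simpl. apply qinv_mul.
Defined.

Lemma mreg_op (Q : invQuantale) : m_regular_quantale Q -> m_regular_quantale (opQ Q).
Proof.
  intros [[[M1 [M2 M3]] [E1 S1]] [[[N1 [N2 N3]] [E2 S2]] C]].
  split; [|split].
  - split; [|split].
    + split; [|split].
      * intros a b x. simpl. apply N1.
      * intros S x. simpl. apply M3.
      * intros a S. simpl. apply M2.
    + intros x. eapply join_of_mono; [|apply (E2 x)].
      intros y [m [b ->]]. exists b, m. reflexivity.
    + intros x y H. apply S2. exact H.
  - split; [|split].
    + split; [|split].
      * intros x a b. simpl. apply M1.
      * intros S b. simpl. apply M3.
      * intros x S. simpl. apply M2.
    + intros x. eapply join_of_mono; [|apply (E1 x)].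
      intros y [a [m ->]]. exists m, a. reflexivity.
    + intros x y H. apply S1. exact H.
  - intros a x b. simpl. symmetry. apply C.
Qed.

Lemma good_flip (X : supLattice) (P : X -> X -> X -> X) :
  good P -> (forall x1 x2, (forall u v, P x1 v u = P x2 v u) -> x1 = x2) ->
  good (fun u v w => P w v u).
Proof.
  intros G Hc. split.
  - intros S y z. apply (g3 G).
  - intros x S z. apply (g2 G).
  - intros x y S. apply (g1 G).
  - intros. symmetry. apply (gA G).
  - intros. rewrite (gB G). symmetry. apply (gA G).
  - exact Hc.
  - intros x. eapply join_of_mono; [|apply (gess G x)].
    intros y [u [v [w ->]]]. exists w, v, u. reflexivity.
Qed.

Lemma dir2 (X : supLattice) :
  (exists p : tensor3 X (conj_lat X) X -> X,
      tensor_sup_preserving p /\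
      (forall x : X, exists t, p t = x) /\
      (forall x1 x2 x3 x4 x5 : X,
         p (ttensor (p (ttensor x1 x2 x3)) x4 x5)
           = p (ttensor x1 (p (ttensor x4 x3 x2)) x5) /\
         p (ttensor x1 (p (ttensor x4 x3 x2)) x5)
           = p (ttensor x1 x2 (p (ttensor x3 x4 x5)))) /\
      (forall x1 x2 : X,
         (forall u v : X, p (ttensor u v x1) = p (ttensor u v x2)) -> x1 = x2) /\
      (forall x1 x2 : X,
         (forall u v : X, p (ttensor x1 v u) = p (ttensor x2 v u)) -> x1 = x2))
  ->
  (exists (A B : invQuantale)
          (lact : A -> X -> X) (ract : X -> B -> X)
          (lip : X -> X -> A) (rip : X -> X -> B),
      m_regular_quantale A /\ m_regular_quantale B /\
      is_imprimitivity lact ract lip rip).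
Proof.
  unfold conj_lat.
  intros [p [Hsp [Hsurj [Ha [Hb Hc]]]]].
  pose (P := fun x y z => p (ttensor x y z)).
  assert (G : good P).
  { split.
    - intros S y z. unfold P. rewrite ttensor_sup1, Hsp, image_image. reflexivity.
    - intros x S z. unfold P. rewrite ttensor_sup2, Hsp, image_image. reflexivity.
    - intros x y S. unfold P. rewrite ttensor_sup3, Hsp, image_image. reflexivity.
    - intros x1 x2 x3 x4 x5. unfold P. destruct (Ha x1 x2 x3 x4 x5) as [E1 E2].
      rewrite E1; exact E2.
    - intros x1 x2 x3 x4 x5. unfold P. exact (proj2 (Ha x1 x2 x3 x4 x5)).
    - intros x1 x2 H. apply Hb. exact H.
    - intros x. destruct (Hsurj x) as [t <-]. rewrite (tdecomp _ _ _ t), Hsp.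
      eexists. split; [|reflexivity].
      intros y [s [[a [b [c [_ ->]]]] ->]]. exists a, b, c. reflexivity. }
  assert (Hc' : forall x1 x2, (forall u v, P x1 v u = P x2 v u) -> x1 = x2) by exact Hc.
  pose (G' := good_flip X P G Hc').
  pose (P' := fun u v w : X => P w v u).
  exists (AIQ X P G), (opQ (AIQ X P' G')), (lact X P G), (fun x b => lact X P' G' b x),
    (lip X P G), (fun x y => lip X P' G' y x).
  split; [apply AIQ_mreg|split; [apply mreg_op, AIQ_mreg|]].
  destruct (lact_mod X P G) as [LM1 [LM2 LM3]].
  destruct (lact_mod X P' G') as [KM1 [KM2 KM3]].
  split; [|split; [|split; [|split; [|split; [|split; [|split; [|split; [|split; [|split; [|split]]]]]]]]]].
  - split; [split; [exact (lact_mod X P G) | split; [apply lact_ess | apply lact_sep]]|split].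
    + split; [|split].
      * split; [|split].
        -- intros x a b. simpl. apply KM1.
        -- intros S b. apply KM3.
        -- intros x S. apply KM2.
      * intros x. eapply join_of_mono; [|apply (lact_ess X P' G' x)].
        intros y [a [m ->]]. exists m, a; reflexivity.
      * intros x y H. apply (lact_sep X P' G'). exact H.
    + intros a x b. cbv beta.
      destruct (lact_repr X P G a) as [R HR]. destruct (lact_repr X P' G' b) as [R' HR'].
      rewrite (HR x), (HR' x), LM3, KM3. apply le_antisym.
      * apply sup_least. intros y [t [[u [v [Ruv ->]]] ->]]. rewrite HR'.
        apply sup_least. intros y [u' [v' [R'uv ->]]].
        eapply le_trans; [| apply sup_ub; exists (P' u' v' x); split; [exists u', v'; auto | reflexivity]].
        rewrite HR. apply sup_ub. exists u, v. split; [exact Ruv|].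
        unfold P'. apply (gA G).
      * apply sup_least. intros y [t [[u' [v' [R'uv ->]]] ->]]. rewrite HR.
        apply sup_least. intros y [u [v [Ruv ->]]].
        eapply le_trans; [| apply sup_ub; exists (P u v x); split; [exists u, v; auto | reflexivity]].
        rewrite HR'. apply sup_ub. exists u', v'. split; [exact R'uv|].
        unfold P'. symmetry. apply (gA G).
  - intros S y. apply lip_sup1.
  - intros x S. apply lip_sup2.
  - intros S y. apply lip_sup2.
  - intros x S. apply lip_sup1.
  - intros a x y. apply lip_lact.
  - intros x y. apply lip_inv.
  - intros x y b. simpl. apply lip_lact.
  - intros x y. apply lip_inv.
  - apply lip_full.
  - intros b. eapply join_of_mono; [|apply (lip_full X P' G' b)].
    intros c [x [y ->]]. exists y, x. reflexivity.
  - intros x y z. reflexivity.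
Qed.
Theorem theorem2 (X : supLattice) :
  (exists (A B : invQuantale)
          (lact : A -> X -> X) (ract : X -> B -> X)
          (lip : X -> X -> A) (rip : X -> X -> B),
      m_regular_quantale A /\ m_regular_quantale B /\
      is_imprimitivity lact ract lip rip)
  <->
  (exists p : tensor3 X (conj_lat X) X -> X,
      tensor_sup_preserving p /\
      (forall x : X, exists t, p t = x) /\
      (forall x1 x2 x3 x4 x5 : X,
         p (ttensor (p (ttensor x1 x2 x3)) x4 x5)
           = p (ttensor x1 (p (ttensor x4 x3 x2)) x5) /\
         p (ttensor x1 (p (ttensor x4 x3 x2)) x5)
           = p (ttensor x1 x2 (p (ttensor x3 x4 x5)))) /\
      (forall x1 x2 : X,
         (forall u v : X, p (ttensor u v x1) = p (ttensor u v x2)) -> x1 = x2) /\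
      (forall x1 x2 : X,
         (forall u v : X, p (ttensor x1 v u) = p (ttensor x2 v u)) -> x1 = x2)).
Proof. split; [apply dir1 | apply dir2]. Qed.
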